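(* Let $(\mathcal C,\mathbb E,\mathfrak s)$ be an $n$-exangulated category and $\varphi^\bullet:A^\bullet\to B^\bullet$ a morphism in $S(\mathcal C)$, where $A^\bullet=(A_0\xrightarrow{\alpha_0}\cdots\xrightarrow{\alpha_n}A_{n+1}\overset{\delta}{\dashrightarrow})$ and $B^\bullet=(B_0\xrightarrow{\beta_0}\cdots\xrightarrow{\beta_n}B_{n+1}\overset{\delta'}{\dashrightarrow})$. Then $\underline{\varphi^\bullet}$ is an epimorphism in $S(\mathcal C)/\mathcal R_2$ if and only if $[\varphi_{n+1}\ \ \beta_n]:A_{n+1}\oplus B_n\to B_{n+1}$ is a retraction (split epimorphism) in $\mathcal C$.
   Context: $(\mathcal C,\mathbb E,\mathfrak s)$ is an $n$-exangulated category in the sense of Herschend–Liu–Nakaoka; for $\delta\in\mathbb E(C,A)$, $a_*\delta=\mathbb E(C,a)\delta$, $c^*\delta=\mathbb E(c,A)\delta$. $S(\mathcal C)$ is the category whose objects are distinguished $n$-exangles and whose morphisms $A^\bullet\to B^\bullet$ are tuples $(\varphi_0,\dots,\varphi_{n+1})$ making all squares commute with $(\varphi_0)_*\delta=(\varphi_{n+1})^*\delta'$. $\mathcal R_2$ is the ideal of morphisms $\varphi^\bullet$ with $\varphi_{n+1}$ factoring through $\beta_n$, and $\underline{\varphi^\bullet}$ denotes the class in $S(\mathcal C)/\mathcal R_2$. *)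

(* Defs.v *)
(* n-exangulated categories (Herschend--Liu--Nakaoka),
   written for n = m.+1 (HLN assume n >= 1). *)
From HB Require Import structures.
From mathcomp Require Import all_boot all_algebra.
Set Implicit Arguments. Unset Strict Implicit. Unset Printing Implicit Defensive.
Import GRing.Theory.
Local Open Scope ring_scope.

Record AddCat := {
  Obj :> Type;
  Hom : Obj -> Obj -> zmodType;
  idm : forall A, Hom A A;
  cmp : forall A B C, Hom B C -> Hom A B -> Hom A C;
  cmpA : forall A B C D (h : Hom C D) (g : Hom B C) (f : Hom A B),
      cmp h (cmp g f) = cmp (cmp h g) f;
  cmp1m : forall A B (f : Hom A B), cmp (idm B) f = f;
  cmpm1 : forall A B (f : Hom A B), cmp f (idm A) = f;
  cmpDl : forall A B C (g g' : Hom B C) (f : Hom A B),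
      cmp (g + g') f = cmp g f + cmp g' f;
  cmpDr : forall A B C (g : Hom B C) (f f' : Hom A B),
      cmp g (f + f') = cmp g f + cmp g f';
  zob : Obj;
  zob_id : idm zob = 0;
  bp : Obj -> Obj -> Obj;
  bi1 : forall A B, Hom A (bp A B);
  bi2 : forall A B, Hom B (bp A B);
  bp1 : forall A B, Hom (bp A B) A;
  bp2 : forall A B, Hom (bp A B) B;
  bp11 : forall A B, cmp (bp1 A B) (bi1 A B) = idm A;
  bp22 : forall A B, cmp (bp2 A B) (bi2 A B) = idm B;
  bp12 : forall A B, cmp (bp1 A B) (bi2 A B) = 0;
  bp21 : forall A B, cmp (bp2 A B) (bi1 A B) = 0;
  bpsum : forall A B,
      cmp (bi1 A B) (bp1 A B) + cmp (bi2 A B) (bp2 A B) = idm (bp A B)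
}.

Arguments zob {a}.
Arguments bi1 {a A B}. Arguments bi2 {a A B}.
Arguments bp1 {a A B}. Arguments bp2 {a A B}.

Notation "g ⊚ f" := (cmp g f) (at level 40, left associativity).

Definition eqH (C : AddCat) (A B : C) (e : A = B) : Hom A B :=
  match e in _ = B' return Hom A B' with erefl => idm A end.

Definition rowmap (C : AddCat) (A B Z : C) (f : Hom A Z) (g : Hom B Z)
  : Hom (bp A B) Z := f ⊚ bp1 + g ⊚ bp2.

Definition is_retraction (C : AddCat) (X Y : C) (r : Hom X Y) : Prop :=
  exists t : Hom Y X, r ⊚ t = idm Y.

(* Biadditive functor E : C^op x C -> Ab.  Ext Z A = E(Z,A);          *)
(* pf a = a_* ,  pb c = c^* .                                          *)
Record BiFun (C : AddCat) := {
  Ext : C -> C -> zmodType;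
  pf : forall (Z A A' : C), Hom A A' -> Ext Z A -> Ext Z A';
  pb : forall (Z' Z A : C), Hom Z' Z -> Ext Z A -> Ext Z' A;
  pf_id : forall Z A (d : Ext Z A), pf (idm A) d = d;
  pf_cmp : forall Z A A' A'' (a : Hom A A') (a' : Hom A' A'') (d : Ext Z A),
      pf (a' ⊚ a) d = pf a' (pf a d);
  pb_id : forall Z A (d : Ext Z A), pb (idm Z) d = d;
  pb_cmp : forall Z'' Z' Z A (c' : Hom Z'' Z') (c : Hom Z' Z) (d : Ext Z A),
      pb (c ⊚ c') d = pb c' (pb c d);
  pf_pb : forall Z' Z A A' (a : Hom A A') (c : Hom Z' Z) (d : Ext Z A),
      pf a (pb c d) = pb c (pf a d);
  pf_addd : forall Z A A' (a : Hom A A') (d d' : Ext Z A),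
      pf a (d + d') = pf a d + pf a d';
  pf_adda : forall Z A A' (a a' : Hom A A') (d : Ext Z A),
      pf (a + a') d = pf a d + pf a' d;
  pb_addd : forall Z' Z A (c : Hom Z' Z) (d d' : Ext Z A),
      pb c (d + d') = pb c d + pb c d';
  pb_addc : forall Z' Z A (c c' : Hom Z' Z) (d : Ext Z A),
      pb (c + c') d = pb c d + pb c' d
}.

Arguments Ext {C} b.
Arguments pf {C b Z A A'}.
Arguments pb {C b Z' Z A}.

Definition castExt (C : AddCat) (E : BiFun C) (A A' Z Z' : C)
  (eA : A = A') (eZ : Z' = Z) (d : Ext E Z A) : Ext E Z' A' :=
  pf (eqH eA) (pb (eqH eZ) d).

(* (n+2)-term sequences X^0 -> X^1 -> ... -> X^{n+1}, indexed by nat  *)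
(* (indices > n+1 are irrelevant).                                    *)
Record Cx (C : AddCat) := { ob : nat -> C; df : forall i, Hom (ob i) (ob i.+1) }.
Arguments ob {C}. Arguments df {C}.

Section NExang.
Variable m : nat.
Local Notation n := m.+1.
Variable C : AddCat.
Variable E : BiFun C.

Definition is_cxmor (X Y : Cx C) (f : forall i, Hom (ob X i) (ob Y i)) : Prop :=
  forall i, (i <= n)%N -> f i.+1 ⊚ df X i = df Y i ⊚ f i.

(* homotopy of morphisms in C^{n+2}_{(A,C)} :  k i = phi^{i+1} : X^{i+1} -> Y^i *)
Definition homotopic (X Y : Cx C) (f g : forall i, Hom (ob X i) (ob Y i)) : Prop :=
  exists k : forall i, Hom (ob X i.+1) (ob Y i),
    k 0%N ⊚ df X 0%N = 0 /\
    (forall j, (j < n)%N -> f j.+1 - g j.+1 = df Y j ⊚ k j + k j.+1 ⊚ df X j.+1) /\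
    df Y n ⊚ k n = 0.

(* homotopy equivalence in C^{n+2}_{(A,C)}, the end objects of X and Y
   being identified by e0, e1 *)
Definition htpy_equiv (X Y : Cx C) (e0 : ob Y 0%N = ob X 0%N)
  (e1 : ob Y n.+1 = ob X n.+1) : Prop :=
  exists (f : forall i, Hom (ob X i) (ob Y i)) (g : forall i, Hom (ob Y i) (ob X i)),
    [/\ is_cxmor f, is_cxmor g,
        f 0%N = eqH (esym e0) /\ f n.+1 = eqH (esym e1),
        g 0%N = eqH e0 /\ g n.+1 = eqH e1 &
        homotopic (fun i => g i ⊚ f i) (fun i => idm _) /\
        homotopic (fun i => f i ⊚ g i) (fun i => idm _)].

Definition nExangle (X : Cx C) (d : Ext E (ob X n.+1) (ob X 0%N)) : Prop :=
  [/\ (forall i, (i < n)%N -> df X i.+1 ⊚ df X i = 0),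
      pf (df X 0%N) d = 0 /\ pb (df X n) d = 0,
      (* C(W,X^0) -> ... -> C(W,X^{n+1}) -> E(W,X^0) exact *)
      (forall W : C,
        (forall j, (j < n)%N -> forall g : Hom W (ob X j.+1),
            df X j.+1 ⊚ g = 0 <-> exists h : Hom W (ob X j), df X j ⊚ h = g) /\
        (forall g : Hom W (ob X n.+1),
            pb g d = 0 <-> exists h : Hom W (ob X n), df X n ⊚ h = g)) &
      (* C(X^{n+1},W) -> ... -> C(X^0,W) -> E(X^{n+1},W) exact *)
      (forall W : C,
        (forall g : Hom (ob X 0%N) W,
            pf g d = 0 <-> exists h : Hom (ob X 1%N) W, h ⊚ df X 0%N = g) /\
        (forall j, (j < n)%N -> forall g : Hom (ob X j.+1) W,
            g ⊚ df X j = 0 <-> exists h : Hom (ob X j.+2) W, h ⊚ df X j.+1 = g))].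

(* the realization s : "s X d" means  X \in s(d) *)
Variable s : forall X : Cx C, Ext E (ob X n.+1) (ob X 0%N) -> Prop.
Arguments s : clear implicits.

(* s(d) is a homotopy equivalence class in C^{n+2}_{(A,C)}, for d in E(C,A) *)
Definition is_realization : Prop :=
  (forall (A Z : C) (d : Ext E Z A),
     exists (X : Cx C) (e0 : ob X 0%N = A) (e1 : ob X n.+1 = Z),
       s X (castExt (esym e0) e1 d)) /\
  (forall (X Y : Cx C) (d : Ext E (ob X n.+1) (ob X 0%N))
          (e0 : ob Y 0%N = ob X 0%N) (e1 : ob Y n.+1 = ob X n.+1),
     s X d -> (s Y (castExt (esym e0) e1 d) <-> htpy_equiv e0 e1)) /\
  (forall (X Y : Cx C) (d : Ext E (ob X n.+1) (ob X 0%N))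
          (d' : Ext E (ob Y n.+1) (ob Y 0%N))
          (a : Hom (ob X 0%N) (ob Y 0%N)) (c : Hom (ob X n.+1) (ob Y n.+1)),
     s X d -> s Y d' -> pf a d = pb c d' ->
     exists f : forall i, Hom (ob X i) (ob Y i),
       [/\ is_cxmor f, f 0%N = a & f n.+1 = c]).

Definition R1 : Prop :=
  forall X d, s X d -> nExangle d.

Definition R2 : Prop :=
  (forall (X : Cx C) (e : ob X 0%N = ob X 1%N),
     df X 0%N = eqH e -> (forall i, (1 < i <= n.+1)%N -> ob X i = zob) -> s X 0) /\
  (forall (X : Cx C) (e : ob X n = ob X n.+1),
     (forall i, (i < n)%N -> ob X i = zob) -> df X n = eqH e -> s X 0).

Definition isInfl (A B : C) (f : Hom A B) : Prop :=
  exists (X : Cx C) (d : Ext E (ob X n.+1) (ob X 0%N))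
         (e0 : ob X 0%N = A) (e1 : ob X 1%N = B),
    s X d /\ df X 0%N = eqH (esym e1) ⊚ f ⊚ eqH e0.

Definition isDefl (B Z : C) (g : Hom B Z) : Prop :=
  exists (X : Cx C) (d : Ext E (ob X n.+1) (ob X 0%N))
         (e0 : ob X n = B) (e1 : ob X n.+1 = Z),
    s X d /\ df X n = eqH (esym e1) ⊚ g ⊚ eqH e0.

Definition EA1 : Prop :=
  (forall (A B D : C) (f : Hom A B) (g : Hom B D),
     isInfl f -> isInfl g -> isInfl (g ⊚ f)) /\
  (forall (A B D : C) (f : Hom A B) (g : Hom B D),
     isDefl f -> isDefl g -> isDefl (g ⊚ f)).

(* M is (a representative of) the mapping cone M_f of f : X -> Y with f^0 = 1:
   M^0 = X^1, M^i = X^{i+1} (+) Y^i (1 <= i <= n), M^{n+1} = Y^{n+1},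
   d^0 = [-d^1_X ; f^1], d^i = [[-d^{i+1}_X, 0], [f^{i+1}, d^i_Y]],
   d^n = [f^{n+1}  d^n_Y]. *)
Definition is_cone (X Y : Cx C) (f : forall i, Hom (ob X i) (ob Y i)) (M : Cx C)
  (e0 : ob M 0%N = ob X 1%N) (e1 : ob M n.+1 = ob Y n.+1) : Prop :=
  exists (iX : forall i, Hom (ob X i.+1) (ob M i)) (iY : forall i, Hom (ob Y i) (ob M i))
         (pX : forall i, Hom (ob M i) (ob X i.+1)) (pY : forall i, Hom (ob M i) (ob Y i)),
  [/\ (forall i, (0 < i <= n)%N ->
         [/\ pX i ⊚ iX i = idm _, pY i ⊚ iY i = idm _, pX i ⊚ iY i = 0,
             pY i ⊚ iX i = 0 & iX i ⊚ pX i + iY i ⊚ pY i = idm _]),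
      pX 1%N ⊚ df M 0%N = - (df X 1%N ⊚ eqH e0) /\
      pY 1%N ⊚ df M 0%N = f 1%N ⊚ eqH e0,
      (forall i, (0 < i < n)%N ->
         [/\ pX i.+1 ⊚ df M i ⊚ iX i = - df X i.+1,
             pX i.+1 ⊚ df M i ⊚ iY i = 0,
             pY i.+1 ⊚ df M i ⊚ iX i = f i.+1 &
             pY i.+1 ⊚ df M i ⊚ iY i = df Y i]) &
      eqH e1 ⊚ df M n ⊚ iX n = f n.+1 /\ eqH e1 ⊚ df M n ⊚ iY n = df Y n].

(* M is (a representative of) the mapping cocone M^f of f : X -> Y with f^{n+1} = 1:
   M^0 = X^0, M^{j+1} = X^{j+1} (+) Y^j (0 <= j < n), M^{n+1} = Y^n,
   d^0 = [-d^0_X ; f^0], d^i = [[-d^i_X, 0], [f^i, d^{i-1}_Y]],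
   d^n = [f^n  d^{n-1}_Y]. *)
Definition is_cocone (X Y : Cx C) (f : forall i, Hom (ob X i) (ob Y i)) (M : Cx C)
  (e0 : ob M 0%N = ob X 0%N) (e1 : ob M n.+1 = ob Y n) : Prop :=
  exists (iX : forall j, Hom (ob X j.+1) (ob M j.+1)) (iY : forall j, Hom (ob Y j) (ob M j.+1))
         (pX : forall j, Hom (ob M j.+1) (ob X j.+1)) (pY : forall j, Hom (ob M j.+1) (ob Y j)),
  [/\ (forall j, (j < n)%N ->
         [/\ pX j ⊚ iX j = idm _, pY j ⊚ iY j = idm _, pX j ⊚ iY j = 0,
             pY j ⊚ iX j = 0 & iX j ⊚ pX j + iY j ⊚ pY j = idm _]),
      pX 0%N ⊚ df M 0%N = - (df X 0%N ⊚ eqH e0) /\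
      pY 0%N ⊚ df M 0%N = f 0%N ⊚ eqH e0,
      (forall j, (j.+1 < n)%N ->
         [/\ pX j.+1 ⊚ df M j.+1 ⊚ iX j = - df X j.+1,
             pX j.+1 ⊚ df M j.+1 ⊚ iY j = 0,
             pY j.+1 ⊚ df M j.+1 ⊚ iX j = f j.+1 &
             pY j.+1 ⊚ df M j.+1 ⊚ iY j = df Y j]) &
      eqH e1 ⊚ df M n ⊚ iX m = f n /\ eqH e1 ⊚ df M n ⊚ iY m = df Y m].

(* (EA2): for d in E(D,A), c : C -> D, <X, c^* d>, <Y, d> distinguished,
   (1_A, c) has a good lift. *)
Definition EA2 : Prop :=
  forall (X Y : Cx C) (d : Ext E (ob Y n.+1) (ob Y 0%N))
         (c : Hom (ob X n.+1) (ob Y n.+1)) (eA : ob X 0%N = ob Y 0%N),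
    s Y d -> s X (pf (eqH (esym eA)) (pb c d)) ->
    exists f : forall i, Hom (ob X i) (ob Y i),
      [/\ is_cxmor f, f 0%N = eqH eA, f n.+1 = c &
          forall (M : Cx C) (e0 : ob M 0%N = ob X 1%N) (e1 : ob M n.+1 = ob Y n.+1),
            is_cone f e0 e1 ->
            s M (castExt (esym e0) e1 (pf (df X 0%N ⊚ eqH (esym eA)) d))].

(* (EA2^op): for d in E(C,A), a : A -> B, <X, d>, <Y, a_* d> distinguished,
   (a, 1_C) has a good lift. *)
Definition EA2op : Prop :=
  forall (X Y : Cx C) (d : Ext E (ob X n.+1) (ob X 0%N))
         (a : Hom (ob X 0%N) (ob Y 0%N)) (eC : ob X n.+1 = ob Y n.+1),
    s X d -> s Y (pb (eqH (esym eC)) (pf a d)) ->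
    exists f : forall i, Hom (ob X i) (ob Y i),
      [/\ is_cxmor f, f 0%N = a, f n.+1 = eqH eC &
          forall (M : Cx C) (e0 : ob M 0%N = ob X 0%N) (e1 : ob M n.+1 = ob Y n),
            is_cocone f e0 e1 ->
            s M (castExt (esym e0) e1 (pb (eqH (esym eC) ⊚ df Y n) d))].

Definition nExangulated : Prop :=
  [/\ is_realization, R1, R2, EA1 & (EA2 /\ EA2op)].

Record SObj := { sx : Cx C; sd : Ext E (ob sx n.+1) (ob sx 0%N); sdist : s sx sd }.

Definition is_Smor (A B : SObj) (f : forall i, Hom (ob (sx A) i) (ob (sx B) i)) : Prop :=
  is_cxmor f /\ pf (f 0%N) (sd A) = pb (f n.+1) (sd B).

Definition inR2 (A B : SObj) (f : forall i, Hom (ob (sx A) i) (ob (sx B) i)) : Prop :=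
  exists h : Hom (ob (sx A) n.+1) (ob (sx B) n), f n.+1 = df (sx B) n ⊚ h.

Definition epi_modR2 (A B : SObj) (f : forall i, Hom (ob (sx A) i) (ob (sx B) i)) : Prop :=
  forall (D : SObj) (g1 g2 : forall i, Hom (ob (sx B) i) (ob (sx D) i)),
    is_Smor g1 -> is_Smor g2 ->
    inR2 (fun i => g1 i ⊚ f i - g2 i ⊚ f i) -> inR2 (fun i => g1 i - g2 i).

End NExang.

(* Main.v *)
Require Import Defs.
From mathcomp Require Import all_boot.
From HB Require Import structures.
From mathcomp Require Import ssralg.
From Stdlib Require Import ClassicalEpsilon ProofIrrelevance.
Set Implicit Arguments. Unset Strict Implicit. Unset Printing Implicit Defensive.
Import GRing.Theory.

Section Alg.
Local Open Scope ring_scope.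
Variable C : AddCat.

Lemma cmp0l (A B D : C) (f : Hom A B) : (0 : Hom B D) ⊚ f = 0.
Proof. by apply: (addrI ((0 : Hom B D) ⊚ f)); rewrite -cmpDl !addr0. Qed.
Lemma cmp0r (A B D : C) (g : Hom B D) : g ⊚ (0 : Hom A B) = 0.
Proof. by apply: (addrI (g ⊚ (0 : Hom A B))); rewrite -cmpDr !addr0. Qed.
Lemma cmpNl (A B D : C) (g : Hom B D) (f : Hom A B) : (- g) ⊚ f = - (g ⊚ f).
Proof. by apply: (addrI (g ⊚ f)); rewrite -cmpDl !subrr cmp0l. Qed.
Lemma cmpNr (A B D : C) (g : Hom B D) (f : Hom A B) : g ⊚ (- f) = - (g ⊚ f).
Proof. by apply: (addrI (g ⊚ f)); rewrite -cmpDr !subrr cmp0r. Qed.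
Lemma cmpAr (A B D F : C) (h : Hom D F) (g : Hom B D) (f : Hom A B) :
  (h ⊚ g) ⊚ f = h ⊚ (g ⊚ f).
Proof. by rewrite cmpA. Qed.
Lemma bp11r (A B D : C) (x : Hom D A) : bp1 ⊚ ((bi1 : Hom A (bp A B)) ⊚ x) = x.
Proof. by rewrite cmpA bp11 cmp1m. Qed.
Lemma bp22r (A B D : C) (x : Hom D B) : bp2 ⊚ ((bi2 : Hom B (bp A B)) ⊚ x) = x.
Proof. by rewrite cmpA bp22 cmp1m. Qed.
Lemma bp12r (A B D : C) (x : Hom D B) : (bp1 : Hom (bp A B) A) ⊚ (bi2 ⊚ x) = 0.
Proof. by rewrite cmpA bp12 cmp0l. Qed.
Lemma bp21r (A B D : C) (x : Hom D A) : (bp2 : Hom (bp A B) B) ⊚ (bi1 ⊚ x) = 0.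
Proof. by rewrite cmpA bp21 cmp0l. Qed.

Definition castH (P Q : C) : Hom P Q :=
  match excluded_middle_informative (P = Q) with
  | left e => eqH e | right _ => 0 end.

Lemma castH_eq (P Q : C) (e : P = Q) : castH P Q = eqH e.
Proof.
rewrite /castH; case: (excluded_middle_informative (P = Q)) => [e'|ne].
  by rewrite (proof_irrelevance _ e e').
by case: (ne e).
Qed.
Lemma castH_id (P : C) : castH P P = idm P.
Proof. by rewrite (castH_eq erefl). Qed.
Lemma castHK (P Q : C) : P = Q -> castH Q P ⊚ castH P Q = idm P.
Proof. by move=> e; case: Q / e; rewrite castH_id cmp1m. Qed.
Lemma castHKr (P Q D : C) (x : Hom D P) : P = Q -> castH Q P ⊚ (castH P Q ⊚ x) = x.
Proof. by move=> e; rewrite cmpA castHK // cmp1m. Qed.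

Lemma eqHK (P Q : C) (e : P = Q) : eqH e ⊚ eqH (esym e) = idm Q.
Proof. by case: Q / e; rewrite /= cmp1m. Qed.

Variable E : BiFun C.
Lemma pf0 (Z A A' : C) (d : Ext E Z A) : pf (0 : Hom A A') d = 0.
Proof. by apply: (addrI (pf (0 : Hom A A') d)); rewrite -pf_adda !addr0. Qed.
Lemma pb0 (Z' Z A : C) (d : Ext E Z A) : pb (0 : Hom Z' Z) d = 0.
Proof. by apply: (addrI (pb (0 : Hom Z' Z) d)); rewrite -pb_addc !addr0. Qed.
End Alg.

Ltac simp := rewrite ?(cmpAr, cmpDl, cmpDr, cmpNl, cmpNr, cmp0l, cmp0r, bp11r, bp22r,
  bp12r, bp21r, bp11, bp22, bp12, bp21, cmp1m, cmpm1, addr0, add0r, oppr0).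

Section Cone.
Local Open Scope ring_scope.
Variables (C : AddCat) (m : nat) (X Y : Cx C) (f : forall i, Hom (ob X i) (ob Y i)).

Definition BP i : C := bp (ob X i.+1) (ob Y i).
Definition obM (i : nat) : C :=
  if i == 0%N then ob X 1 else if i == m.+2 then ob Y m.+2 else BP i.
Definition dfM (i : nat) : Hom (obM i) (obM i.+1) :=
  if i == 0%N then
    castH (BP 1) (obM i.+1) ⊚ (bi1 ⊚ (- df X 1) + bi2 ⊚ f 1) ⊚ castH (obM i) (ob X 1)
  else if i == m.+1 then
    castH (ob Y m.+2) (obM i.+1) ⊚ (f m.+2 ⊚ bp1 + df Y m.+1 ⊚ bp2)
      ⊚ castH (obM i) (BP m.+1)
  else castH (BP i.+1) (obM i.+1)
      ⊚ (bi1 ⊚ ((- df X i.+1) ⊚ bp1) + bi2 ⊚ (f i.+1 ⊚ bp1 + df Y i ⊚ bp2))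
      ⊚ castH (obM i) (BP i).
Definition Mc : Cx C := {| ob := obM; df := dfM |}.

Lemma obM_BP i : (0 < i <= m.+1)%N -> obM i = BP i.
Proof.
case: i => // i /= H; rewrite /obM /=.
by have -> : (i.+1 == m.+2) = false by apply/negbTE; rewrite eqSS; apply/eqP=> e; subst; rewrite ltnn in H.
Qed.
Lemma obM_top : ob Mc m.+2 = ob Y m.+2.
Proof. by rewrite /= /obM /= eqxx. Qed.

Definition iXc i : Hom (ob X i.+1) (ob Mc i) := castH (BP i) (obM i) ⊚ bi1.
Definition iYc i : Hom (ob Y i) (ob Mc i) := castH (BP i) (obM i) ⊚ bi2.
Definition pXc i : Hom (ob Mc i) (ob X i.+1) := bp1 ⊚ castH (obM i) (BP i).
Definition pYc i : Hom (ob Mc i) (ob Y i) := bp2 ⊚ castH (obM i) (BP i).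

Lemma dfM_top : dfM m.+1 = castH (ob Y m.+2) (obM m.+2)
  ⊚ (f m.+2 ⊚ bp1 + df Y m.+1 ⊚ bp2) ⊚ castH (obM m.+1) (BP m.+1).
Proof. by rewrite /dfM /= eqxx. Qed.

Lemma Mc_cone : is_cone f (M := Mc) (erefl (ob X 1)) obM_top.
Proof.
exists iXc, iYc, pXc, pYc; split.
- move=> i Hi; have e := obM_BP Hi; rewrite /iXc /iYc /pXc /pYc.
  split; rewrite ?cmpAr ?(castHKr _ (esym e)) ?bp11 ?bp22 ?bp12 ?bp21 ?cmp0r //.
  by rewrite -cmpDr !cmpA -cmpDl bpsum cmp1m castHK.
- have e1 : obM 1 = BP 1 by apply: obM_BP.
  have h0 : castH (obM 0) (ob X 1) = idm _ := castH_id _.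
  rewrite /pXc /pYc /= /dfM /= h0; simp; rewrite !(castHKr _ (esym e1)); simp.
  by split.
- move=> i /andP [Hi0 Hin].
  have e1 : obM i = BP i by apply: obM_BP; rewrite Hi0 ltnW.
  have e2 : obM i.+1 = BP i.+1 by apply: obM_BP.
  have -> : df Mc i = castH (BP i.+1) (obM i.+1)
      ⊚ (bi1 ⊚ ((- df X i.+1) ⊚ bp1) + bi2 ⊚ (f i.+1 ⊚ bp1 + df Y i ⊚ bp2))
      ⊚ castH (obM i) (BP i).
    rewrite /= /dfM ifF; last by apply/negbTE; rewrite -lt0n.
    by rewrite ifF //; apply/negbTE; rewrite neq_ltn Hin.
  rewrite /pXc /pYc /iXc /iYc; simp.
  rewrite !(castHKr _ (esym e2)) !(castHKr _ (esym e1)); simp.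
  by split.
- have e1 : obM m.+1 = BP m.+1 by apply: obM_BP; rewrite leqnn.
  have -> : df Mc m.+1 = castH (ob Y m.+2) (obM m.+2) ⊚ (f m.+2 ⊚ bp1 + df Y m.+1 ⊚ bp2)
      ⊚ castH (obM m.+1) (BP m.+1).
    by rewrite /= /dfM /= eqxx.
  rewrite -(castH_eq obM_top) /iXc /iYc; simp.
  rewrite !(castHKr _ (esym obM_top)) !(castHKr _ (esym e1)); simp.
  by split.
Qed.
End Cone.

Theorem lemma4p2 (m : nat) (C : AddCat) (E : BiFun C)
  (s : forall X : Cx C, Ext E (ob X m.+2) (ob X 0) -> Prop)
  (HC : nExangulated s)
  (A B : SObj s) (phi : forall i, Hom (ob (sx A) i) (ob (sx B) i))
  (Hphi : is_Smor phi) :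
  epi_modR2 phi <-> is_retraction (rowmap (phi m.+2) (df (sx B) m.+1)).
Proof.
split; last first.
  move=> [t Ht] D g1 g2 [Hg1 _] [Hg2 _] [h /= Hh].
  exists (h ⊚ bp1 ⊚ t + (g1 m.+1 - g2 m.+1) ⊚ bp2 ⊚ t)%R.
  have -> : (g1 m.+2 - g2 m.+2 = (g1 m.+2 - g2 m.+2) ⊚ (rowmap (phi m.+2) (df (sx B) m.+1) ⊚ t))%R.
    by rewrite Ht cmpm1.
  rewrite /rowmap; simp.
  rewrite !cmpA Hg1 // Hg2 // -Hh !cmpDl !cmpNl.
  by rewrite addrACA.
move=> Hepi.
case: HC => [[Hex [_ HR0]] _ _ _ [HEA2 _]].
have [X [eX0 [eX1 sX]]] := Hex (ob (sx B) 0) (ob (sx A) m.+2) (pb (phi m.+2) (sd B)).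
have sX' : s X (pf (eqH (esym eX0)) (pb (phi m.+2 ⊚ eqH eX1) (sd B))).
  by rewrite pb_cmp.
have [f [Hf f0 fn Hcone]] := HEA2 X (sx B) (sd B) (phi m.+2 ⊚ eqH eX1) eX0 (sdist B) sX'.
have sM := Hcone _ _ _ (Mc_cone m f).
set dM := castExt _ _ _ in sM.
pose D := Build_SObj sM.
pose a := df X 0 ⊚ eqH (esym eX0).
pose c := castH (ob (sx B) m.+2) (ob (Mc m f) m.+2).
have compat : pf a (sd B) = pb c dM.
  rewrite /dM /castExt /= pf_id -pb_cmp /c (castH_eq (esym (obM_top m f))).
  by rewrite eqHK pb_id.
have [g [Hg g0 gn]] := HR0 (sx B) (Mc m f) (sd B) dM a c (sdist B) sM compat.
have Hg1 : is_Smor (A := B) (B := D) g by split => //; rewrite g0 gn.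
have Hg2 : is_Smor (A := B) (B := D) (fun _ => 0%R).
  by split; [move=> i _; rewrite cmp0l cmp0r | rewrite pf0 pb0].
have HR : inR2 (A := A) (B := D) (fun i => g i ⊚ phi i - 0 ⊚ phi i)%R.
  exists (iXc m f m.+1 ⊚ eqH (esym eX1)).
  rewrite gn cmp0l subr0 /= dfM_top /iXc; simp.
  have eB : obM m X (sx B) m.+1 = BP X (sx B) m.+1 by apply: obM_BP; rewrite leqnn.
  rewrite (castHKr _ (esym eB)); simp.
  by rewrite fn cmpAr eqHK cmpm1.
have [h' Hh'] := Hepi D g (fun _ => 0%R) Hg1 Hg2 HR.
exists (bi1 ⊚ eqH eX1 ⊚ pXc m f m.+1 ⊚ h' + bi2 ⊚ pYc m f m.+1 ⊚ h')%R.
rewrite -(castHK (esym (obM_top m f))).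
move: Hh' => /=; rewrite gn subr0 -/c => ->.
rewrite dfM_top /rowmap /pXc /pYc fn; simp.
rewrite !(castHKr _ (esym (obM_top m f))).
done.
Qed.
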